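(* For every random variable $f$, the quantization $\widehat f$ is a well-defined bounded self-adjoint operator on $H$. If moreover $f\ge 0$, then $\|\widehat f\|\le\|f\|$, where $\|f\|=\left(\int|f|^2d\nu\right)^{1/2}$.
   Context: $(\Omega,\mathcal{A},\nu)$ is a probability space and $H=L_2(\Omega,\mathcal{A},\nu)$ is the complex Hilbert space with inner product $\langle f,g\rangle=\int\bar f g\,d\nu$. A random variable is a real-valued $f\in H$. For a random variable $f\ge 0$, its quantization $\widehat f$ is the operator on $H$ given by $(\widehat f g)(y)=\int\min[f(x),f(y)]\,g(x)\,d\nu(x)$. For an arbitrary random variable $f$, write $f=f^+-f^-$ with $f^+=\max(f,0)$, $f^-=-\min(f,0)$, and define $\widehat f=\widehat{f^+}-\widehat{f^-}$. *)

(* Defs.v *)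
From HB Require Import structures.
From mathcomp Require Import all_boot all_order all_algebra.
From mathcomp Require Import all_classical all_reals all_analysis.
From mathcomp Require Import complex.
Set Implicit Arguments. Unset Strict Implicit. Unset Printing Implicit Defensive.
Import Order.TTheory GRing.Theory Num.Theory.
Local Open Scope ring_scope.
Local Open Scope classical_set_scope.

Section Quantization.
Context {d : measure_display} {T : measurableType d} {R : realType}.
Variable P : probability T R.

Local Notation C := (complex R).

Definition cint (h : T -> C) : C :=
  ((Rintegral P setT (fun x => complex.Re (h x))) +i* (Rintegral P setT (fun x => complex.Im (h x))))%C.

Definition cabs2 (z : C) : R := complex.Re z ^+ 2 + complex.Im z ^+ 2.

Definition cintegrable (h : T -> C) : Prop :=
  P.-integrable setT (fun x => (complex.Re (h x))%:E) /\ P.-integrable setT (fun x => (complex.Im (h x))%:E).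

Definition inH (g : T -> C) : Prop :=
  measurable_fun setT (fun x => complex.Re (g x)) /\ measurable_fun setT (fun x => complex.Im (g x)) /\
  P.-integrable setT (fun x => (cabs2 (g x))%:E).

(* a random variable: a real-valued element of H *)
Definition is_random_variable (f : T -> R) : Prop :=
  measurable_fun setT f /\ P.-integrable setT (fun x => (f x ^+ 2)%:E).

Definition inner (u v : T -> C) : C := cint (fun x => (conjc (u x)) * v x).

Definition hnorm (g : T -> C) : R := Num.sqrt (Rintegral P setT (fun x => cabs2 (g x))).

Definition rnorm (f : T -> R) : R := Num.sqrt (Rintegral P setT (fun x => f x ^+ 2)).

Definition fplus (f : T -> R) : T -> R := fun x => Num.max (f x) 0.
Definition fminus (f : T -> R) : T -> R := fun x => - Num.min (f x) 0.

Definition quant_nonneg (f : T -> R) (g : T -> C) : T -> C :=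
  fun y => cint (fun x => ((Num.min (f x) (f y))%:C)%C * g x).

Definition quant (f : T -> R) (g : T -> C) : T -> C :=
  fun y => quant_nonneg (fplus f) g y - quant_nonneg (fminus f) g y.

Definition well_defined_bounded_selfadjoint (Q : (T -> C) -> (T -> C)) (f : T -> R) : Prop :=
  (* the defining integrals converge absolutely for nu-a.e. y *)
  (forall g, inH g ->
     {ae P, forall y, cintegrable (fun x => ((Num.min (fplus f x) (fplus f y))%:C)%C * g x)
                   /\ cintegrable (fun x => ((Num.min (fminus f x) (fminus f y))%:C)%C * g x)}) /\
  (forall g, inH g -> inH (Q g)) /\
  (* Q is compatible with nu-a.e. equality, hence defined on equivalence classes *)
  (forall g1 g2, inH g1 -> inH g2 -> {ae P, forall x, g1 x = g2 x} ->
     {ae P, forall y, Q g1 y = Q g2 y}) /\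
  (forall (a b : C) g h, inH g -> inH h ->
     {ae P, forall y, Q (fun x => a * g x + b * h x) y = a * Q g y + b * Q h y}) /\
  (exists M : R, 0 <= M /\ forall g, inH g -> hnorm (Q g) <= M * hnorm g) /\
  (forall g h, inH g -> inH h -> inner (Q g) h = inner g (Q h)).

End Quantization.

(* Main.v *)
Require Import Defs.
From HB Require Import structures.
From mathcomp Require Import all_boot all_order all_algebra.
From mathcomp Require Import all_classical all_reals all_analysis.
From mathcomp Require Import complex.
From mathcomp Require Import measurable_realfun.
From mathcomp Require Import ring lra.
Import Order.TTheory GRing.Theory Num.Theory.
Local Open Scope ring_scope.

Local Open Scope classical_set_scope.
Section Core.
Context {d} {T : measurableType d} {R : realType} (P : probability T R).

Definition L2 (u : T -> R) := measurable_fun setT u /\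
  P.-integrable setT (fun x => (u x ^+ 2)%:E).
Definition I1 (u : T -> R) := P.-integrable setT (fun x => (u x)%:E).
Local Notation RI := (Rintegral P setT).

Lemma mexpr2 (u : T -> R) : measurable_fun setT u ->
  measurable_fun setT (fun x => u x ^+ 2).
Proof.
move=> mu; rewrite (_ : (fun x => _) = u \* u).
  exact: measurable_realfun.measurable_funM.
by apply/funext=> x; rewrite expr2.
Qed.

Lemma intE (g : T -> R) : I1 g -> (\int[P]_x (g x)%:E = (RI g)%:E)%E.
Proof. by move=> ig; rewrite /Rintegral fineK //; exact: integrable_fin_num. Qed.

Lemma I1_meas (u : T -> R) : I1 u -> measurable_fun setT u.
Proof. by move=> /integrableP[/measurable_EFinP]. Qed.

Lemma I1_eq {u v : T -> R} : (forall x, u x = v x) -> I1 u -> I1 v.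
Proof. by move=> e; rewrite (_ : v = u) //; apply/funext=> x; rewrite e. Qed.

Lemma I1_le {u v : T -> R} : measurable_fun setT u ->
  (forall x, `|u x| <= `|v x|) -> I1 v -> I1 u.
Proof.
move=> mu uv iv; apply: (le_integrable measurableT _ _ iv).
  exact/measurable_EFinP.
by move=> x _; rewrite !abse_EFin lee_fin.
Qed.

Lemma I1D {u v : T -> R} : I1 u -> I1 v -> I1 (fun x => u x + v x).
Proof.
move=> iu iv; apply: (eq_integrable measurableT _ _ _ (integrableD measurableT iu iv)).
by move=> x _.
Qed.

Lemma I1Z (c : R) {u : T -> R} : I1 u -> I1 (fun x => c * u x).
Proof.
move=> iu; rewrite /I1; apply: (eq_integrable measurableT _ _ _ (integrableZl measurableT c iu)).
by move=> x _.
Qed.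

Lemma I1N {u : T -> R} : I1 u -> I1 (fun x => - u x).
Proof.
move=> iu; apply: (I1_eq _ (I1Z (-1) iu)) => x; by rewrite mulN1r.
Qed.

Lemma I1B {u v : T -> R} : I1 u -> I1 v -> I1 (fun x => u x - v x).
Proof. by move=> iu iv; apply: I1D => //; exact: I1N. Qed.

Lemma I1_cst (c : R) : I1 (fun _ => c).
Proof. exact: (finite_measure_integrable_cst P c measurableT). Qed.

Lemma L2_cst c : L2 (fun _ => c).
Proof. split; [exact: measurable_cst | exact: (I1_cst (c ^+ 2))]. Qed.

Lemma amgm (a b : R) : `|a * b| <= a ^+ 2 + b ^+ 2.
Proof.
rewrite normrM -(real_normK (num_real a)) -(real_normK (num_real b)).
have := sqr_ge0 (`|a| - `|b|); have := normr_ge0 a; have := normr_ge0 b.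
nra.
Qed.

Lemma L2_mul {u v : T -> R} : L2 u -> L2 v -> I1 (fun x => u x * v x).
Proof.
move=> [mu iu] [mv iv]; apply: (I1_le _ _ (I1D iu iv)).
  exact: measurable_realfun.measurable_funM.
move=> x; apply: (le_trans (amgm _ _)).
by rewrite ger0_norm // addr_ge0 // sqr_ge0.
Qed.

Lemma L2_I1 {u} : L2 u -> I1 u.
Proof.
move=> hu; apply: (I1_eq _ (L2_mul hu (L2_cst 1))) => x; by rewrite mulr1.
Qed.

Lemma L2_abs {u} : L2 u -> L2 (fun x => `|u x|).
Proof.
move=> [mu iu]; split; first exact: measurableT_comp.
apply: (I1_eq (u := fun x => u x ^+ 2) _ iu) => x; by rewrite real_normK // num_real.
Qed.

Lemma L2_lin (a b : R) {u v} : L2 u -> L2 v -> L2 (fun x => a * u x + b * v x).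
Proof.
move=> [mu iu] [mv iv]; split.
  by apply: measurable_realfun.measurable_funD; apply: measurable_realfun.measurable_funM => //; exact: measurable_cst.
apply: (I1_le (v := fun x => 2 * (a ^+ 2 * u x ^+ 2) + 2 * (b ^+ 2 * v x ^+ 2))).
- apply: mexpr2; apply: measurable_realfun.measurable_funD; apply: measurable_realfun.measurable_funM => //;
    exact: measurable_cst.
- move=> x; rewrite !ger0_norm ?sqr_ge0 //; last first.
    by rewrite addr_ge0 // mulr_ge0 // mulr_ge0 // sqr_ge0.
  have := sqr_ge0 (a * u x - b * v x); nra.
- by apply: I1D; apply: I1Z; apply: I1Z.
Qed.

Lemma RI_cst c : RI (fun _ => c) = c.
Proof. rewrite Rintegral_cst //. have h1 : fine (P setT) = 1 := congr1 fine (probability_setT P). by rewrite h1 mulr1. Qed.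

Lemma CS {u} : L2 u -> (RI (fun x => `|u x|)) ^+ 2 <= RI (fun x => u x ^+ 2).
Proof.
move=> hu; set A := RI (fun x => `|u x|).
have ia : I1 (fun x => `|u x|) by exact/L2_I1/L2_abs.
have [_ i2] := hu.
have : 0 <= RI (fun x => (`|u x| - A) ^+ 2) by apply: Rintegral_ge0 => x _; exact: sqr_ge0.
rewrite (_ : (fun x => _) = (fun x => (u x ^+ 2 - (2 * A) * `|u x|) + A ^+ 2)); last first.
  apply/funext=> x; rewrite -(real_normK (num_real (u x))); ring.
have i3 : I1 (fun x => 2 * A * `|u x|) by exact: I1Z.
have i4 : I1 (fun x => u x ^+ 2 - 2 * A * `|u x|) by exact: I1B.
rewrite (RintegralD measurableT i4 (I1_cst _)) (RintegralB measurableT i2 i3).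
rewrite (RintegralZl _ measurableT ia) RI_cst -/A; nra.
Qed.


Lemma measEFin (h : T * T -> R) : measurable_fun setT h ->
  measurable_fun setT (fun z => (h z)%:E).
Proof. by move=> mh; exact/measurable_EFinP. Qed.

Lemma prod_int (h : T * T -> R) (a b : T -> R) : measurable_fun setT h ->
  (forall x y, `|h (x, y)| <= a y * b x) -> (forall x, 0 <= b x) ->
  I1 a -> I1 b -> (P \x P)%E.-integrable setT (fun z => (h z)%:E).
Proof.
move=> mh hab b0 ia ib.
apply/(integrable21ltyP P P (measEFin _ mh)).
have mab : measurable_fun setT (fun z : T * T => `|(h z)%:E|%E).
  by apply: measurableT_comp => //; exact: measEFin.
apply: (@le_lt_trans _ _ (\int[P]_y ((a y * RI b)%:E))%E).
  apply: ge0_le_integral => //.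
  - by move=> y _; apply: integral_ge0 => x _.
  - exact: (measurable_fun_fubini_tonelli_G (fun z : T * T => `|(h z)%:E|%E) mab).
  - apply/measurable_EFinP; apply: measurable_realfun.measurable_funM.
      exact: I1_meas.
    exact: measurable_cst.
  move=> y _; rewrite -(RintegralZl _ measurableT ib) -intE; last exact: I1Z.
  apply: ge0_le_integral => //.
  - apply: measurableT_comp => //.
    apply/measurable_EFinP; exact: (measurable_fun_pair1 y mh).
  - apply/measurable_EFinP; apply: measurable_realfun.measurable_funM.
      exact: measurable_cst.
    exact: I1_meas.
  by move=> x _; rewrite abse_EFin lee_fin.
rewrite intE; first exact: ltry.
apply: (I1_eq (u := fun y => RI b * a y) _ (I1Z _ ia)) => y; by rewrite mulrC.
Qed.


Definition kq (F u : T -> R) (y : T) : R := RI (fun x => Num.min (F x) (F y) * u x).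

Set Default Proof Using "All".
Section Kernel.
Context (F : T -> R) (mF : measurable_fun setT F) (F0 : forall x, 0 <= F x)
  (iF2 : I1 (fun x => F x ^+ 2)).

Let L2F : L2 F. Proof. by split. Qed.

Let m0 x y : 0 <= Num.min (F x) (F y).
Proof. by rewrite le_min !F0. Qed.
Let m1 x y : Num.min (F x) (F y) <= F y.
Proof. by rewrite ge_min lexx orbT. Qed.

Lemma kint {u} y : L2 u -> I1 (fun x => Num.min (F x) (F y) * u x).
Proof.
move=> hu; apply: (I1_le (v := fun x => F y * u x)).
- apply: measurable_realfun.measurable_funM; last exact: hu.1.
  by apply: measurable_minr => //; exact: measurable_cst.
- by move=> x; rewrite !normrM ler_wpM2r // !ger0_norm.
- exact: I1Z (L2_I1 hu).
Qed.

Lemma mK {u} : measurable_fun setT u ->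
  measurable_fun setT (fun z : T * T => Num.min (F z.1) (F z.2) * u z.1).
Proof.
move=> mu; apply: measurable_realfun.measurable_funM.
  apply: measurable_minr; apply: measurableT_comp => //.
exact: measurableT_comp.
Qed.

Lemma kq_meas {u} : L2 u -> measurable_fun setT (kq F u).
Proof.
move=> hu.
have hi := prod_int (fun z => Num.min (F z.1) (F z.2) * u z.1) F
  (fun x => `|u x|) (mK hu.1) _ _ (L2_I1 L2F) (L2_I1 (L2_abs hu)).
have hi' := hi (fun x y => ltac:(by rewrite /= normrM ger0_norm // ler_wpM2r))
  (fun x => normr_ge0 _).
have mG := measurable_fubini_G hi'.
exact: (measurableT_comp (fine_measurable measurableT) mG).
Qed.

Lemma kbound {u} y : L2 u -> `|kq F u y| <= F y * RI (fun x => `|u x|).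
Proof.
move=> hu; apply: le_trans (le_normr_Rintegral measurableT (kint y hu)) _.
rewrite -RintegralZl //; last exact: L2_I1 (L2_abs hu).
apply: le_Rintegral => //.
- apply: (I1_le (v := fun x => Num.min (F x) (F y) * u x)) (kint y hu) => //.
  exact/measurableT_comp/I1_meas/(kint y hu).
  by move=> x; rewrite normr_id.
- exact: I1Z (L2_I1 (L2_abs hu)).
by move=> x _; rewrite normrM ger0_norm // ler_wpM2r.
Qed.

Lemma kq_L2 {u} : L2 u -> L2 (kq F u).
Proof.
move=> hu; split; first exact: kq_meas.
set A := RI (fun x => `|u x|).
have A0 : 0 <= A by apply: Rintegral_ge0.
apply: (I1_le (v := fun y => A ^+ 2 * F y ^+ 2)).
- exact/mexpr2/kq_meas.
- move=> y; rewrite ger0_norm ?sqr_ge0 // ger0_norm ?mulr_ge0 ?sqr_ge0 //.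
  rewrite -(real_normK (num_real (kq F u y))).
  have hb := kbound y hu; have hq := normr_ge0 (kq F u y); have := F0 y; rewrite -/A in hb.
  have hm : 0 <= (F y * A - `|kq F u y|) * (F y * A + `|kq F u y|).
    by apply: mulr_ge0; [rewrite subr_ge0 | apply: addr_ge0 => //; apply: mulr_ge0].
  move=> _; rewrite expr2 (_ : A ^+ 2 * F y ^+ 2 = (F y * A) * (F y * A)); last by ring.
  nra.
- exact: I1Z.
Qed.

Lemma kq_lin (a b : R) {u v} y : L2 u -> L2 v ->
  kq F (fun x => a * u x + b * v x) y = a * kq F u y + b * kq F v y.
Proof.
move=> hu hv; rewrite /kq.
rewrite (eq_Rintegral _ (g := fun x => a * (Num.min (F x) (F y) * u x) +
                                      b * (Num.min (F x) (F y) * v x))); last first.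
  by move=> x _; ring.
rewrite RintegralD //; [|exact: I1Z (kint y hu)|exact: I1Z (kint y hv)].
by rewrite !RintegralZl //; [exact: kint y hv|exact: kint y hu].
Qed.

Lemma kq_ae {u1 u2} y : measurable_fun setT u1 -> measurable_fun setT u2 ->
  {ae P, forall x, u1 x = u2 x} -> kq F u1 y = kq F u2 y.
Proof.
move=> mu1 mu2 h; rewrite /kq /Rintegral; congr fine.
apply: ae_eq_integral => //.
- apply/measurable_EFinP; apply: measurable_realfun.measurable_funM => //.
  by apply: measurable_minr => //; exact: measurable_cst.
- apply/measurable_EFinP; apply: measurable_realfun.measurable_funM => //.
  by apply: measurable_minr => //; exact: measurable_cst.
by apply: filterS h => x e _; rewrite e.
Qed.

Lemma kq_sym {u v} : L2 u -> L2 v ->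
  RI (fun y => kq F u y * v y) = RI (fun x => u x * kq F v x).
Proof.
move=> hu hv.
pose h := fun z : T * T => Num.min (F z.1) (F z.2) * u z.1 * v z.2.
have mh : measurable_fun setT h.
  apply: measurable_realfun.measurable_funM; first exact: mK hu.1.
  exact: measurableT_comp hv.1 _.
have hi := prod_int h (fun y => F y * `|v y|) (fun x => `|u x|) mh _ _
  (L2_mul L2F (L2_abs hv)) (L2_I1 (L2_abs hu)).
have hi' := hi (fun x y => ltac:(rewrite /h /= !normrM ger0_norm //
  [in X in _ <= X]mulrAC; by rewrite !ler_wpM2r)) (fun x => normr_ge0 _).
have fub := Fubini hi'.
have e1 x : (\int[P]_y (h (x, y))%:E = (u x * kq F v x)%:E)%E.
  rewrite /kq -RintegralZl //; last exact: kint x hv.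
  rewrite -intE; last exact: I1Z (kint x hv).
  by apply: eq_integral => y _; congr EFin; rewrite /h /= minC; ring.
have e2 y : (\int[P]_x (h (x, y))%:E = (kq F u y * v y)%:E)%E.
  rewrite /kq -RintegralZr //; last exact: kint y hu.
  rewrite -intE; last first.
    by apply: (I1_eq _ (I1Z (v y) (kint y hu))) => x; rewrite mulrC.
  by apply: eq_integral => x _; congr EFin.
move: fub.
under eq_integral => x _ do rewrite e1.
under [X in _ = X]eq_integral => y _ do rewrite e2.
rewrite (intE _ (L2_mul hu (kq_L2 hv))) (intE _ (L2_mul (kq_L2 hu) hv)).
by case=> ->.
Qed.

End Kernel.

End Core.

Section Assembly.
Context {d} {T : measurableType d} {R : realType} (P : probability T R).
Local Notation L2 := (L2 P).
Local Notation I1 := (I1 P).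
Local Notation RI := (Rintegral P setT).
Local Notation kq := (kq P).

Context (f : T -> R) (mf : measurable_fun setT f) (if2 : I1 (fun x => f x ^+ 2)).

Lemma L2_eq {u v : T -> R} : (forall x, u x = v x) -> L2 u -> L2 v.
Proof. by move=> e; rewrite (_ : v = u) //; apply/funext=> x; rewrite e. Qed.

Let mfp : measurable_fun setT (fplus f).
Proof. by apply: measurable_maxr => //; exact: measurable_cst. Qed.
Let mfm : measurable_fun setT (fminus f).
Proof.
apply: (measurable_funN (f := fun x => Num.min (f x) 0)).
by apply: measurable_minr => //; exact: measurable_cst.
Qed.
Let fp0 x : 0 <= fplus f x. Proof. by rewrite /fplus le_max lexx orbT. Qed.
Let fm0 x : 0 <= fminus f x. Proof. by rewrite /fminus oppr_ge0 ge_min lexx orbT. Qed.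
Let fpm x : fplus f x + fminus f x = `|f x|.
Proof.
rewrite /fplus /fminus; have [h|h] := leP 0 (f x).
  by rewrite subr0 ger0_norm.
by rewrite sub0r ltr0_norm.
Qed.
Let ifp : I1 (fun x => fplus f x ^+ 2).
Proof.
apply: (I1_le P (v := fun x => f x ^+ 2)) if2; first exact: mexpr2.
move=> x; rewrite !ger0_norm ?sqr_ge0 //.
have := fpm x; have := fp0 x; have := fm0 x; have := normr_ge0 (f x).
rewrite -(real_normK (num_real (f x))); nra.
Qed.
Let ifm : I1 (fun x => fminus f x ^+ 2).
Proof.
apply: (I1_le P (v := fun x => f x ^+ 2)) if2; first exact: mexpr2.
move=> x; rewrite !ger0_norm ?sqr_ge0 //.
have := fpm x; have := fp0 x; have := fm0 x; have := normr_ge0 (f x).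
rewrite -(real_normK (num_real (f x))); nra.
Qed.

Definition Qr (u : T -> R) (y : T) := kq (fplus f) u y - kq (fminus f) u y.

Lemma Qr_L2 {u} : L2 u -> L2 (Qr u).
Proof.
move=> hu; apply: (L2_eq _ (L2_lin P 1 (-1) (kq_L2 P _ mfp fp0 ifp hu) (kq_L2 P _ mfm fm0 ifm hu))).
by move=> x; rewrite /Qr; ring.
Qed.

Lemma Qr_bound {u} y : L2 u -> Qr u y ^+ 2 <= f y ^+ 2 * RI (fun x => u x ^+ 2).
Proof.
move=> hu; set A := RI (fun x => `|u x|).
have A0 : 0 <= A by apply: Rintegral_ge0.
have h1 := kbound P _ mfp fp0 ifp y hu; have h2 := kbound P _ mfm fm0 ifm y hu.
rewrite -/A in h1 h2.
have hq : `|Qr u y| <= `|f y| * A.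
  rewrite -fpm /Qr mulrDl; apply: le_trans (ler_normB _ _) _; exact: lerD.
have hcs := CS P hu; rewrite -/A in hcs.
apply: (@le_trans _ _ (f y ^+ 2 * A ^+ 2)); last first.
  by apply: ler_wpM2l => //; exact: sqr_ge0.
rewrite -(real_normK (num_real (Qr u y))) -(real_normK (num_real (f y))).
have := normr_ge0 (Qr u y); have := normr_ge0 (f y).
have hm : 0 <= (`|f y| * A - `|Qr u y|) * (`|f y| * A + `|Qr u y|).
  apply: mulr_ge0; first by rewrite subr_ge0.
  by apply: addr_ge0 => //; apply: mulr_ge0.
nra.
Qed.

Lemma Qr_lin (a b : R) {u v} y : L2 u -> L2 v ->
  Qr (fun x => a * u x + b * v x) y = a * Qr u y + b * Qr v y.
Proof.
move=> hu hv; rewrite /Qr (kq_lin P _ mfp fp0 ifp) // (kq_lin P _ mfm fm0 ifm) //; ring.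
Qed.

Lemma Qr_ae {u1 u2} y : measurable_fun setT u1 -> measurable_fun setT u2 ->
  {ae P, forall x, u1 x = u2 x} -> Qr u1 y = Qr u2 y.
Proof.
move=> m1 m2 h; rewrite /Qr (kq_ae P _ mfp fp0 ifp y m1 m2 h) (kq_ae P _ mfm fm0 ifm y m1 m2 h) //.
Qed.

Lemma Qr_sym {u v} : L2 u -> L2 v ->
  RI (fun y => Qr u y * v y) = RI (fun x => u x * Qr v x).
Proof.
move=> hu hv.
have i1 := L2_mul P (kq_L2 P _ mfp fp0 ifp hu) hv.
have i2 := L2_mul P (kq_L2 P _ mfm fm0 ifm hu) hv.
have i3 := L2_mul P hu (kq_L2 P _ mfp fp0 ifp hv).
have i4 := L2_mul P hu (kq_L2 P _ mfm fm0 ifm hv).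
rewrite (eq_Rintegral _ (g := fun y => kq (fplus f) u y * v y - kq (fminus f) u y * v y));
  last by move=> y _; rewrite /Qr; ring.
rewrite [RHS](eq_Rintegral _ (g := fun x => u x * kq (fplus f) v x - u x * kq (fminus f) v x));
  last by move=> x _; rewrite /Qr; ring.
rewrite (RintegralB measurableT i1 i2) (RintegralB measurableT i3 i4).
by rewrite (kq_sym P _ mfp fp0 ifp hu hv) (kq_sym P _ mfm fm0 ifm hu hv).
Qed.

Lemma Qr_int {u} y : L2 u ->
  I1 (fun x => Num.min (fplus f x) (fplus f y) * u x) /\
  I1 (fun x => Num.min (fminus f x) (fminus f y) * u x).
Proof. by move=> hu; split; [exact: (kint P _ mfp fp0 ifp y hu)|exact: (kint P _ mfm fm0 ifm y hu)]. Qed.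

End Assembly.

Local Close Scope classical_set_scope.
Section Cx.
Context {R : realType}.
Lemma cext (z w : complex R) : complex.Re z = complex.Re w ->
  complex.Im z = complex.Im w -> z = w.
Proof. by case: z => a b; case: w => c e /= -> ->. Qed.
Lemma cReB (z w : complex R) : complex.Re (z - w) = complex.Re z - complex.Re w.
Proof. by case: z => a b; case: w => c e. Qed.
Lemma cImB (z w : complex R) : complex.Im (z - w) = complex.Im z - complex.Im w.
Proof. by case: z => a b; case: w => c e. Qed.
Lemma cReD (z w : complex R) : complex.Re (z + w) = complex.Re z + complex.Re w.
Proof. by case: z => a b; case: w => c e. Qed.
Lemma cImD (z w : complex R) : complex.Im (z + w) = complex.Im z + complex.Im w.
Proof. by case: z => a b; case: w => c e. Qed.
Lemma cReM (z w : complex R) : complex.Re (z * w) =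
  complex.Re z * complex.Re w - complex.Im z * complex.Im w.
Proof. by case: z => a b; case: w => c e. Qed.
Lemma cImM (z w : complex R) : complex.Im (z * w) =
  complex.Re z * complex.Im w + complex.Im z * complex.Re w.
Proof. by case: z => a b; case: w => c e /=; ring. Qed.
Lemma cReCM (z w : complex R) : complex.Re (conjc z * w) =
  complex.Re z * complex.Re w + complex.Im z * complex.Im w.
Proof. by case: z => a b; case: w => c e /=; ring. Qed.
Lemma cImCM (z w : complex R) : complex.Im (conjc z * w) =
  complex.Re z * complex.Im w - complex.Im z * complex.Re w.
Proof. by case: z => a b; case: w => c e /=; ring. Qed.
Lemma cReR (m : R) (w : complex R) : complex.Re ((m%:C)%C * w) = m * complex.Re w.
Proof. by case: w => c e /=; ring. Qed.
Lemma cImR (m : R) (w : complex R) : complex.Im ((m%:C)%C * w) = m * complex.Im w.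
Proof. by case: w => c e /=; ring. Qed.
End Cx.

Theorem mainTheorem7 (d : measure_display) (T : measurableType d) (R : realType)
  (P : probability T R) (f : T -> R) :
  is_random_variable P f ->
  well_defined_bounded_selfadjoint P (quant P f) f /\
  ((forall x, 0 <= f x) ->
     forall g : T -> complex R, inH P g -> hnorm P (quant P f g) <= rnorm P f * hnorm P g).
Proof.
move=> [mf if2].
have ReQ g y : complex.Re (quant P f g y) = Qr P f (fun x => complex.Re (g x)) y.
  rewrite /quant /quant_nonneg /cint cReB /= /Qr /kq.
  by congr (_ - _); apply: eq_Rintegral => x _; rewrite cReR.
have ImQ g y : complex.Im (quant P f g y) = Qr P f (fun x => complex.Im (g x)) y.
  rewrite /quant /quant_nonneg /cint cImB /= /Qr /kq.
  by congr (_ - _); apply: eq_Rintegral => x _; rewrite cImR.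
have hL2 g : inH P g -> L2 P (fun x => complex.Re (g x)) /\ L2 P (fun x => complex.Im (g x)).
  move=> [mr [mi ic]]; split; split => //.
  - apply: (I1_le P (v := fun x => cabs2 (g x))) ic; first exact: mexpr2.
    move=> x; rewrite /cabs2 !ger0_norm ?addr_ge0 ?sqr_ge0 //.
    by rewrite lerDl sqr_ge0.
  - apply: (I1_le P (v := fun x => cabs2 (g x))) ic; first exact: mexpr2.
    move=> x; rewrite /cabs2 !ger0_norm ?addr_ge0 ?sqr_ge0 //.
    by rewrite lerDr sqr_ge0.
have bound g : inH P g -> hnorm P (quant P f g) <= rnorm P f * hnorm P g.
  move=> hg; have [hr hi] := hL2 g hg.
  have [qr qi] := (Qr_L2 P f mf if2 hr, Qr_L2 P f mf if2 hi).
  rewrite /hnorm /rnorm -sqrtrM; last by apply: Rintegral_ge0 => x _; exact: sqr_ge0.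
  apply: ler_wsqrtr.
  rewrite (eq_Rintegral _ (g := fun y => Qr P f (fun x => complex.Re (g x)) y ^+ 2 +
                                     Qr P f (fun x => complex.Im (g x)) y ^+ 2)); last first.
    by move=> y _; rewrite /cabs2 ReQ ImQ.
  have -> : Rintegral P setT (fun x => cabs2 (g x)) =
      Rintegral P setT (fun x => complex.Re (g x) ^+ 2) +
      Rintegral P setT (fun x => complex.Im (g x) ^+ 2).
    by rewrite -(RintegralD measurableT hr.2 hi.2).
  set c := (_ + _ : R).
  rewrite -(RintegralZr c measurableT if2).
  apply: le_Rintegral => //.
  - exact: I1D qr.2 qi.2.
  - apply: (I1_eq P (u := fun x => c * f x ^+ 2)) (I1Z P c if2) => x.
    by rewrite mulrC.
  move=> y _; rewrite /c mulrDr.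
  by apply: lerD; [exact: Qr_bound | exact: Qr_bound].
split=> //.
split.
  move=> g hg; have [hr hi] := hL2 g hg.
  apply: aeW => y.
  have [ar br] := Qr_int P f mf if2 y hr.
  have [ai bi] := Qr_int P f mf if2 y hi.
  split; split.
  - by apply: (I1_eq P _ ar) => x; rewrite cReR.
  - by apply: (I1_eq P _ ai) => x; rewrite cImR.
  - by apply: (I1_eq P _ br) => x; rewrite cReR.
  - by apply: (I1_eq P _ bi) => x; rewrite cImR.
split.
  move=> g hg; have [hr hi] := hL2 g hg.
  have [qr qi] := (Qr_L2 P f mf if2 hr, Qr_L2 P f mf if2 hi).
  split; [|split].
  - by rewrite (_ : (fun x => _) = Qr P f (fun x => complex.Re (g x)));
      [exact: qr.1 | apply/funext => y; rewrite ReQ].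
  - by rewrite (_ : (fun x => _) = Qr P f (fun x => complex.Im (g x)));
      [exact: qi.1 | apply/funext => y; rewrite ImQ].
  - apply: (I1_eq P _ (I1D P qr.2 qi.2)) => y.
    by rewrite /cabs2 ReQ ImQ.
split.
  move=> g1 g2 h1 h2 e; apply: aeW => y.
  have [[m1r _] [m1i _]] := hL2 g1 h1.
  have [[m2r _] [m2i _]] := hL2 g2 h2.
  by apply: cext; [rewrite !ReQ | rewrite !ImQ]; apply: Qr_ae => //;
    apply: filterS e => x ->.
split.
  move=> a b g h hg hh; apply: aeW => y.
  have [hgr hgi] := hL2 g hg; have [hhr hhi] := hL2 h hh.
  have l1 := L2_lin P (complex.Re a) (- complex.Im a) hgr hgi.
  have l2 := L2_lin P (complex.Re b) (- complex.Im b) hhr hhi.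
  have l3 := L2_lin P (complex.Im a) (complex.Re a) hgr hgi.
  have l4 := L2_lin P (complex.Im b) (complex.Re b) hhr hhi.
  apply: cext.
    rewrite ReQ cReD !cReM ReQ ImQ ReQ ImQ.
    rewrite (_ : (fun x => _) = fun x => 1 * (complex.Re a * complex.Re (g x) +
          - complex.Im a * complex.Im (g x)) + 1 * (complex.Re b * complex.Re (h x) +
          - complex.Im b * complex.Im (h x))); last first.
      by apply/funext => x; rewrite cReD !cReM; ring.
    rewrite (Qr_lin P f mf if2 _ _ _ l1 l2) (Qr_lin P f mf if2 _ _ _ hgr hgi)
      (Qr_lin P f mf if2 _ _ _ hhr hhi); ring.
  rewrite ImQ cImD !cImM ReQ ImQ ReQ ImQ.
  rewrite (_ : (fun x => _) = fun x => 1 * (complex.Im a * complex.Re (g x) +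
        complex.Re a * complex.Im (g x)) + 1 * (complex.Im b * complex.Re (h x) +
        complex.Re b * complex.Im (h x))); last first.
    by apply/funext => x; rewrite cImD !cImM; ring.
  rewrite (Qr_lin P f mf if2 _ _ _ l3 l4) (Qr_lin P f mf if2 _ _ _ hgr hgi)
    (Qr_lin P f mf if2 _ _ _ hhr hhi); ring.
split.
  by exists (rnorm P f); split; [exact: sqrtr_ge0 | exact: bound].
move=> g h hg hh.
have [hgr hgi] := hL2 g hg; have [hhr hhi] := hL2 h hh.
have [qgr qgi] := (Qr_L2 P f mf if2 hgr, Qr_L2 P f mf if2 hgi).
have [qhr qhi] := (Qr_L2 P f mf if2 hhr, Qr_L2 P f mf if2 hhi).
have ReI (k : T -> complex R) : complex.Re (cint P k) = Rintegral P setT (fun x => complex.Re (k x)) by [].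
have ImI (k : T -> complex R) : complex.Im (cint P k) = Rintegral P setT (fun x => complex.Im (k x)) by [].
apply: cext; rewrite /inner; [rewrite !ReI|rewrite !ImI].
  rewrite (eq_Rintegral _ (g := fun y => Qr P f (fun x => complex.Re (g x)) y * complex.Re (h y)
      + Qr P f (fun x => complex.Im (g x)) y * complex.Im (h y))); last first.
    by move=> y _; rewrite cReCM ReQ ImQ.
  rewrite [RHS](eq_Rintegral _ (g := fun y => complex.Re (g y) * Qr P f (fun x => complex.Re (h x)) y
      + complex.Im (g y) * Qr P f (fun x => complex.Im (h x)) y)); last first.
    by move=> y _; rewrite cReCM ReQ ImQ.
  rewrite (RintegralD measurableT (L2_mul P qgr hhr) (L2_mul P qgi hhi)).
  rewrite (RintegralD measurableT (L2_mul P hgr qhr) (L2_mul P hgi qhi)).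
  by rewrite (Qr_sym P f mf if2 hgr hhr) (Qr_sym P f mf if2 hgi hhi).
rewrite (eq_Rintegral _ (g := fun y => Qr P f (fun x => complex.Re (g x)) y * complex.Im (h y)
    - Qr P f (fun x => complex.Im (g x)) y * complex.Re (h y))); last first.
  by move=> y _; rewrite cImCM ReQ ImQ.
rewrite [RHS](eq_Rintegral _ (g := fun y => complex.Re (g y) * Qr P f (fun x => complex.Im (h x)) y
    - complex.Im (g y) * Qr P f (fun x => complex.Re (h x)) y)); last first.
  by move=> y _; rewrite cImCM ReQ ImQ.
rewrite (RintegralB measurableT (L2_mul P qgr hhi) (L2_mul P qgi hhr)).
rewrite (RintegralB measurableT (L2_mul P hgr qhi) (L2_mul P hgi qhr)).
by rewrite (Qr_sym P f mf if2 hgr hhi) (Qr_sym P f mf if2 hgi hhr).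
Qed.
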